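(* In the incremental implementation of Algorithm 2(b) below, for each receiver $j$ and each slot $t$, at the end of slot $t$: for every vector $\mathbf{u}=(u_1,\dots,u_{Q(t)})$ in the row space $U_j(t)$ of the matrix $B_j$, the linear combination $\sum_{i=1}^{Q(t)}u_i\mathbf{p}_i$ is known to receiver $j$, where $\mathbf{p}_i$ denotes the $i$-th packet in the sender's queue at the end of slot $t$ and $Q(t)$ is the queue length.
   Context: Setting: a sender broadcasts to $n$ receivers over a slotted packet erasure broadcast channel; packets are vectors over $\mathbb{F}_q$; each slot packets may arrive at the sender; the sender transmits at most one linear combination of queued packets per slot; each receiver receives it or suffers an erasure, and perfect feedback tells the sender which receivers received it. A node has seen a packet $\mathbf{p}$ if it can compute $\mathbf{p}+\mathbf{q}$ with $\mathbf{q}$ a linear combination of packets that arrived after $\mathbf{p}$. Incremental implementation of Algorithm 2(b): (1) Initialize matrices $B_1,\dots,B_n$ as empty. In each slot: (2) append the $a$ newly arrived packets to the end of the queue and append $a$ all-zero columns on the right of each $B_j$; (3) if the queue is nonempty, compute a linear combination $\mathbf{g}$ of queued packets (by a coding module) and transmit it; (4) for each receiver $j$ that received the transmission, add the coefficient vector of $\mathbf{g}$ with respect to the current queue contents as a new row of $B_j$ and perform Gaussian elimination (bringing $B_j$ to reduced row echelon form); (5) let $S_j'$ be the set of queued packets corresponding to pivot columns of $B_j$ and $S_\Delta'=\bigcap_jS_j'$; replace each $B_j$ by the submatrix obtained by deleting the columns in $S_\Delta'$ and the corresponding pivot rows; (6) drop the packets in $S_\Delta'$ from the queue. Columns of $B_j$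 are never rearranged, so column $i$ of $B_j$ corresponds to the $i$-th packet in the queue. *)

(* Defs.v *)
From HB Require Import structures.
From mathcomp Require Import all_boot all_order all_algebra.
Set Implicit Arguments. Unset Strict Implicit. Unset Printing Implicit Defensive.
Import GRing.Theory.
Local Open Scope ring_scope.

Section Alg2b.
Variables (F : fieldType) (n m : nat).
(* n receivers (indexed by 'I_n), packets are vectors of length m over F. *)

Definition mx_of_rows (k : nat) (B : seq (seq F)) : 'M[F]_(size B, k) :=
  \matrix_(i < size B, l < k) nth 0 (nth [::] B i) l.

Definition zero_row (r : seq F) : bool := all (fun x => x == 0) r.
Definition pivot (r : seq F) : nat := find (fun x => x != 0) r.

Definition is_rref (k : nat) (B : seq (seq F)) : Prop :=
  [/\ all (fun r => size r == k) B,
      (forall i1 i2, (i1 < i2 < size B)%N ->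
         zero_row (nth [::] B i1) -> zero_row (nth [::] B i2)),
      (forall i, (i < size B)%N -> ~~ zero_row (nth [::] B i) ->
         nth 0 (nth [::] B i) (pivot (nth [::] B i)) = 1),
      (forall i1 i2, (i1 < i2 < size B)%N ->
         ~~ zero_row (nth [::] B i1) -> ~~ zero_row (nth [::] B i2) ->
         (pivot (nth [::] B i1) < pivot (nth [::] B i2))%N) &
      (forall i i', (i < size B)%N -> (i' < size B)%N -> i != i' ->
         ~~ zero_row (nth [::] B i) ->
         nth 0 (nth [::] B i') (pivot (nth [::] B i)) = 0)].

Definition pivot_cols (B : seq (seq F)) : seq nat :=
  [seq pivot r | r <- B & ~~ zero_row r].

Definition pad_cols (a : nat) (B : seq (seq F)) : seq (seq F) :=
  [seq r ++ nseq a 0 | r <- B].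

Definition drop_idx (T : Type) (S : pred nat) (s : seq T) : seq T :=
  mask [seq ~~ S i | i <- iota 0 (size s)] s.

Definition delete_cols_rows (S : pred nat) (B : seq (seq F)) : seq (seq F) :=
  [seq drop_idx S r | r <- B & ~~ (~~ zero_row r && S (pivot r))].

Definition comb (c : seq F) (q : seq 'rV[F]_m) : 'rV[F]_m :=
  \sum_(i < size q) nth 0 c i *: nth 0 q i.

(* A receiver knows x iff x is in the span of the transmissions it received. *)
Definition known (rec : seq 'rV[F]_m) (x : 'rV[F]_m) : bool :=
  (x <= \matrix_(i < size rec) nth 0 rec i)%MS.

Record state := State {
  queue : seq 'rV[F]_m;
  Bm : 'I_n -> seq (seq F);
  recv : 'I_n -> seq 'rV[F]_m }.     (* transmissions received by j so far *)

Definition init_state : state :=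
  State [::] (fun _ => [::]) (fun _ => [::]).

(* One slot of the algorithm.  arr = arrivals, c = coefficient vector chosen by
   the coding module, R = receivers not suffering an erasure, Bg j = result of
   Gaussian elimination at receiver j (any RREF matrix with the right row space). *)
Definition slot_step (s s' : state) : Prop :=
  exists (arr : seq 'rV[F]_m) (c : seq F) (R : {set 'I_n})
         (Bg : 'I_n -> seq (seq F)),
  let q1 := queue s ++ arr in
  let B1 := fun j => pad_cols (size arr) (Bm s j) in
  let recvd := fun j => (q1 != [::]) && (j \in R) in
  let B2 := fun j => if recvd j then Bg j else B1 j in
  let S := fun i : nat => [forall j : 'I_n, i \in pivot_cols (B2 j)] in
  [/\ size c = size q1,
      (forall j, recvd j ->
         is_rref (size q1) (Bg j) /\
         (mx_of_rows (size q1) (Bg j) == mx_of_rows (size q1) (rcons (B1 j) c))%MS),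
      queue s' = drop_idx S q1,
      (forall j, Bm s' j = delete_cols_rows S (B2 j)) &
      (forall j, recv s' j =
         if recvd j then rcons (recv s j) (comb c q1) else recv s j)].

Inductive reachable : state -> Prop :=
  | reach_init : reachable init_state
  | reach_step s s' : reachable s -> slot_step s s' -> reachable s'.

End Alg2b.

(* Main.v *)
Require Import Defs.
From mathcomp Require Import all_boot all_order all_algebra.
Import GRing.Theory.
Local Open Scope ring_scope.

Section Proofs.
Variables (F : fieldType) (m : nat).
Local Notation rv := 'rV[F]_m.

Definition qmx (q : seq rv) : 'M[F]_(size q, m) := \matrix_(i < size q) nth 0 q i.

Lemma sum_qmx (q : seq rv) (u : 'rV[F]_(size q)) :
  \sum_(i < size q) u 0 i *: nth 0 q i = u *m qmx q.
Proof. rewrite mulmx_sum_row; apply: eq_bigr => i _; by rewrite rowK. Qed.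

Lemma comb_row (r : seq F) (q : seq rv) :
  comb r q = (\row_(l < size q) nth 0 r l) *m qmx q.
Proof. rewrite -sum_qmx /comb; apply: eq_bigr => i _; by rewrite mxE. Qed.

Lemma known_nth (R : seq rv) i : (i < size R)%N -> known R (nth 0 R i).
Proof.
move=> Hi; rewrite /known.
have -> : nth 0 R i = row (Ordinal Hi) (\matrix_(i < size R) nth 0 R i) by rewrite rowK.
exact: row_sub.
Qed.

Lemma qmx_rcons (R : seq rv) y : (qmx R <= qmx (rcons R y))%MS.
Proof.
apply/row_subP => i; rewrite rowK.
have Hi : (i < size (rcons R y))%N by rewrite size_rcons ltnS ltnW.
rewrite (_ : nth 0 R i = nth 0 (rcons R y) i); first by have := known_nth (rcons R y) _ Hi.
by rewrite nth_rcons ltn_ord.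
Qed.

Lemma known_rcons (R : seq rv) y x : known R x -> known (rcons R y) x.
Proof. move=> Hx; exact: (submx_trans Hx (qmx_rcons R y)). Qed.

Lemma known_last (R : seq rv) y : known (rcons R y) y.
Proof.
have Hi : (size R < size (rcons R y))%N by rewrite size_rcons.
have := known_nth (rcons R y) _ Hi; by rewrite nth_rcons ltnn eqxx.
Qed.

Lemma known_span (R q : seq rv) (B : seq (seq F)) (u : 'rV_(size q)) :
  (forall r, r \in B -> known R (comb r q)) ->
  (u <= mx_of_rows (size q) B)%MS -> known R (u *m qmx q).
Proof.
move=> HB /submxP [w ->]; rewrite -mulmxA.
apply: submx_trans (submxMl w _) _.
apply/row_subP => i; rewrite row_mul.
have -> : row i (mx_of_rows (size q) B) = \row_(l < size q) nth 0 (nth [::] B i) l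
  by apply/rowP => l; rewrite !mxE.
rewrite -comb_row; apply: HB; exact: mem_nth.
Qed.

Lemma comb_cons x (r : seq F) (y : rv) q : comb (x :: r) (y :: q) = x *: y + comb r q.
Proof.
by rewrite /comb /= big_ord_recl /=.
Qed.

Lemma comb_pad (r : seq F) (q : seq rv) a arr :
  size r = size q -> comb (r ++ nseq a 0) (q ++ arr) = comb r q.
Proof.
elim: r q => [|x r IH] [|y q] //= Hs.
  rewrite /comb big_ord0 big1 // => i _; by rewrite nth_nseq if_same scale0r.
by rewrite !comb_cons IH //; case: Hs.
Qed.

Definition dropf (S : pred nat) (o : nat) {T : Type} (s : seq T) :=
  mask [seq ~~ S i | i <- iota o (size s)] s.

Lemma dropf_cons (S : pred nat) o T (x : T) s :
  dropf S o (x :: s) = if ~~ S o then x :: dropf S o.+1 s else dropf S o.+1 s.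
Proof. by []. Qed.

Lemma size_dropf2 (S : pred nat) o (r : seq F) (q : seq rv) :
  size r = size q -> size (dropf S o r) = size (dropf S o q).
Proof.
elim: r q o => [|x r IH] [|y q] o //= Hs.
rewrite !dropf_cons; case: ifP => _ /=; rewrite (IH q) //; by case: Hs.
Qed.

Lemma comb_dropf (S : pred nat) o (r : seq F) (q : seq rv) :
  size r = size q -> (forall p, (p < size r)%N -> S (o + p)%N -> nth 0 r p = 0) ->
  comb (dropf S o r) (dropf S o q) = comb r q.
Proof.
elim: r q o => [|x r IH] [|y q] o //= Hs Hz.
have Hz' : forall p, (p < size r)%N -> S (o.+1 + p)%N -> nth 0 r p = 0.
  by move=> p Hp HS; apply: (Hz p.+1) => //; rewrite addnS -addSn.
rewrite !dropf_cons; case: ifP => HS.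
  by rewrite !comb_cons IH //; case: Hs.
have -> : x = 0 by apply: (Hz 0%N); rewrite ?addn0 ?(negbFE HS).
rewrite comb_cons scale0r add0r IH //; by case: Hs.
Qed.

Definition cleanm (B : seq (seq F)) := forall r r', r \in B -> r' \in B -> r != r' ->
  ~~ zero_row r -> nth 0 r' (pivot r) = 0.

Lemma has_nz (x : seq F) : ~~ zero_row x -> has (fun z => z != 0) x.
Proof. by rewrite /zero_row -has_predC. Qed.

Lemma pad_clean a (B : seq (seq F)) k :
  all (fun r => size r == k) B -> cleanm B -> cleanm (pad_cols a B).
Proof.
move=> Hs Hc r r' /mapP [x Hx ->] /mapP [y Hy ->] Hne Hnz.
have Hnzx : ~~ zero_row x.
  by move: Hnz; rewrite /zero_row all_cat all_nseq eqxx orbT andbT.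
have Hh := has_nz _ Hnzx.
have Hpx : (pivot x < size x)%N by rewrite /pivot -has_find.
have Hsx : size x = k by apply/eqP; move/allP: Hs; apply.
have Hsy : size y = k by apply/eqP; move/allP: Hs; apply.
rewrite /pivot find_cat Hh -/(pivot x) nth_cat Hsy -Hsx Hpx.
apply: Hc => //; apply: contraNneq Hne => ->; by [].
Qed.

Lemma zero_dropf (S : pred nat) o (a : seq F) : zero_row a -> zero_row (dropf S o a).
Proof.
elim: a o => [|x a IH] o //= /andP [Hx Ha]; rewrite dropf_cons.
by case: ifP => _ /=; rewrite ?Hx IH.
Qed.

Lemma nth_dropf (S : pred nat) T (x0 : T) s o p : (p < size s)%N -> ~~ S (o + p)%N ->
  nth x0 (dropf S o s) (count (fun i => ~~ S i) (iota o p)) = nth x0 s p.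
Proof.
elim: s o p => [|x s IH] o [|p] //= Hp HS.
  by rewrite addn0 in HS; rewrite dropf_cons HS.
rewrite dropf_cons; have HS' : ~~ S (o.+1 + p)%N by rewrite addSn -addnS.
by case: ifP => Ho /=; rewrite ?add1n ?add0n /= IH.
Qed.

Lemma pivot_dropf (S : pred nat) o (a : seq F) : has (fun x => x != 0) a -> ~~ S (o + pivot a)%N ->
  pivot (dropf S o a) = count (fun i => ~~ S i) (iota o (pivot a)).
Proof.
elim: a o => [|x a IH] o //= Hh HS; rewrite dropf_cons.
move: HS; rewrite /pivot /=; case Hx: (x != 0) => /= HS.
  by rewrite addn0 in HS; rewrite HS /= Hx.
rewrite Hx /= in Hh.
have HS' : ~~ S (o.+1 + pivot a)%N by rewrite addSn -addnS.
case: ifP => Ho /=; rewrite ?Hx /= -/(pivot _) IH //.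
Qed.

Lemma del_clean (S : pred nat) (B : seq (seq F)) k :
  all (fun r => size r == k) B -> cleanm B -> cleanm (delete_cols_rows S B).
Proof.
move=> Hs Hc r r' /mapP [a Ha ->] /mapP [b Hb ->] Hne Hnz.
rewrite mem_filter in Ha; rewrite mem_filter in Hb.
case/andP: Ha => Hca Ha; case/andP: Hb => _ Hb.
have Hnza : ~~ zero_row a by apply: contra Hnz; apply: zero_dropf.
rewrite Hnza /= in Hca.
have Hh := has_nz _ Hnza.
have Hpa : (pivot a < size a)%N by rewrite /pivot -has_find.
have Hsa : size a = k by apply/eqP; move/allP: Hs; apply.
have Hsb : size b = k by apply/eqP; move/allP: Hs; apply.
rewrite /drop_idx -/(dropf S 0 a) -/(dropf S 0 b).
rewrite pivot_dropf // nth_dropf ?Hsb -?Hsa //.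
apply: Hc => //; apply: contraNneq Hne => ->; by [].
Qed.

Definition inv (q : seq rv) (R : seq rv) (B : seq (seq F)) :=
  [/\ all (fun r : seq F => size r == size q) B, cleanm B &
      forall r, r \in B -> known R (comb r q)].

Lemma inv_pad q R B (arr : seq rv) :
  inv q R B -> inv (q ++ arr) R (pad_cols (size arr) B).
Proof.
case=> Hs Hc Hk; rewrite /inv; split.
- apply/allP => r /mapP [x Hx ->]; rewrite !size_cat size_nseq.
  by move/allP: Hs => /(_ x Hx) /eqP ->.
- exact: (pad_clean _ _ _ Hs Hc).
- move=> r /mapP [x Hx ->]; rewrite comb_pad; first exact: Hk.
  by move/allP: Hs => /(_ x Hx) /eqP.
Qed.

Lemma inv_rref q R B1 c Bg :
  inv q R B1 -> is_rref (size q) Bg ->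
  (mx_of_rows (size q) Bg == mx_of_rows (size q) (rcons B1 c))%MS ->
  inv q (rcons R (comb c q)) Bg.
Proof.
case=> Hs Hc Hk [H1 _ _ _ H5] /andP [Hle _]; rewrite /inv; split => //.
- move=> r r' Hr Hr' Hne Hnz.
  rewrite -(nth_index [::] Hr) -(nth_index [::] Hr').
  rewrite -(nth_index [::] Hr) in Hnz.
  apply: H5; rewrite ?index_mem //.
  by apply: contraNneq Hne => Heq; rewrite -(nth_index [::] Hr) -(nth_index [::] Hr') Heq.
- move=> r Hr.
  have Hi : (index r Bg < size Bg)%N by rewrite index_mem.
  have HH : (\row_(l < size q) nth 0 r l) = row (Ordinal Hi) (mx_of_rows (size q) Bg).
    by apply/rowP => l; rewrite !mxE /= nth_index.
  have -> : comb r q = row (Ordinal Hi) (mx_of_rows (size q) Bg) *m qmx q by rewrite comb_row HH.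
  apply: (known_span _ _ (rcons B1 c)).
    move=> x; rewrite mem_rcons in_cons; case/orP => [/eqP ->|Hx].
      exact: known_last.
    by apply: known_rcons; apply: Hk.
  exact: submx_trans (row_sub _ _) Hle.
Qed.

Lemma inv_del (S : pred nat) q R (B : seq (seq F)) :
  (forall i, S i -> i \in pivot_cols B) ->
  inv q R B -> inv (drop_idx S q) R (delete_cols_rows S B).
Proof.
move=> HSp [Hs Hc Hk]; rewrite /inv; split.
- apply/allP => r /mapP [a Ha ->]; rewrite mem_filter in Ha; case/andP: Ha => _ Ha.
  rewrite /drop_idx -/(dropf S 0 a) -/(dropf S 0 q).
  by rewrite (size_dropf2 S 0 _ q) //; move/allP: Hs => /(_ a Ha) /eqP.
- exact: (del_clean _ _ _ Hs Hc).
- move=> r /mapP [a Ha ->]; rewrite mem_filter in Ha; case/andP: Ha => Hca Ha.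
  rewrite /drop_idx -/(dropf S 0 a) -/(dropf S 0 q).
  rewrite comb_dropf; first exact: Hk.
    by move/allP: Hs => /(_ a Ha) /eqP.
  move=> p Hp; rewrite add0n => HSpp.
  have /mapP [r' Hr' Ep] := HSp _ HSpp.
  rewrite mem_filter in Hr'; case/andP: Hr' => Hnz Hr'.
  rewrite Ep; apply: (Hc r' a) => //; apply: contraNneq Hca => Heq.
  by rewrite -Heq Hnz /= -Ep.
Qed.

End Proofs.
Arguments inv {F m}.
Arguments known_span {F m R q B u}.
Arguments sum_qmx {F m q u}.

Lemma inv_reach (F : fieldType) (n m : nat) (s : state F n m) :
  reachable s -> forall j, inv (queue s) (recv s j) (Bm s j).
Proof.
elim=> [|s0 s' _ IH [arr [c [R [Bg [Hc Hg Hq HB Hr]]]]]] j.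
  by rewrite /inv; split => //.
rewrite Hq HB Hr; apply: inv_del.
  by move=> i /forallP; apply.
move: (Hg j); case: ifP => Hrec.
  case/(_ isT) => Href Heq; apply: inv_rref Href Heq.
  exact: inv_pad.
move=> _; exact: inv_pad.
Qed.

Theorem theorem7 (F : finFieldType) (n m : nat) (s : state F n m) :
  reachable s ->
  forall (j : 'I_n) (u : 'rV[F]_(size (queue s))),
    (u <= mx_of_rows (size (queue s)) (Bm s j))%MS ->
    known (recv s j) (\sum_(i < size (queue s)) u 0 i *: nth 0 (queue s) i).
Proof.
move=> Hs j u Hu; have [_ _ Hk] := inv_reach _ _ _ _ Hs j.
rewrite sum_qmx; exact: (known_span Hk Hu).
Qed.
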